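(* Let $\mathcal I$ be a co-analytic ideal on $\omega$ and $F:\omega^\omega\to\mathcal I^+$ a continuous surjection. Then the games $\mathcal H_{\mathsf{Cat}}(\mathcal I,F)$ and $\mathcal G_{\mathsf{Cat}}(\mathcal I)$ are determined.
   Context: $\mathcal P(\omega)$ is identified with $2^\omega$; $\mathcal I$ is co-analytic as a subset of it, and $\mathcal I^+=\mathcal P(\omega)\setminus\mathcal I$. The game $\mathcal G_{\mathsf{Cat}}(\mathcal I)$: in round $n\in\omega$ Player I plays $A_n\in\mathcal I$ and Player II plays $b_n\in\omega\setminus A_n$; II wins iff $\{b_n:n\in\omega\}\in\mathcal I^+$. Let $R$ be the set of functions $f:\omega\to\omega\cup\{-1\}$ with $f(n)<n$ for all $n$ and $\{n:f(n)\ne-1\}$ infinite; for $f\in R$, enumerating $\{n:f(n)\ne-1\}=\{n_i:i\in\omega\}$ increasingly, let $\tilde f(i)=f(n_i)$. The game $\mathcal H_{\mathsf{Cat}}(\mathcal I,F)$: in round $n$ Player I plays $A_n\in\mathcal I$ and Player II plays a pair $(b_n,m_n)$ with $b_n\in\omega\setminus A_n$ and $m_n\in n\cup\{-1\}$; letting $g(n)=m_n$, Player II wins iff $\{n:m_n\ne-1\}$ is infinite and $F(\tilde g)=\{b_n:n\in\omega\}$. A game is determined if one of the players has a winning strategy. *)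

(* Defs.v *)
From Stdlib Require Import Arith List ClassicalEpsilon.
Import ListNotations.

(** A subset of omega, i.e. a point of the Cantor space 2^omega. *)
Definition pset := nat -> bool.

(** Continuity of maps between sequence spaces A^omega -> B^omega
    (product topology of discrete spaces): every finite part of the
    output is determined by a finite part of the input. *)
Definition seq_continuous {A B : Type} (f : (nat -> A) -> (nat -> B)) : Prop :=
  forall (x : nat -> A) (n : nat), exists m : nat,
    forall y : nat -> A, (forall i, i < m -> x i = y i) ->
      forall j, j < n -> f x j = f y j.

Definition analytic (S : pset -> Prop) : Prop :=
  (forall y, ~ S y) \/
  exists f : (nat -> nat) -> pset, seq_continuous f /\
    forall y : pset, S y <-> exists x, forall k, f x k = y k.

Definition coanalytic (I : pset -> Prop) : Prop := analytic (fun y => ~ I y).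

Definition finite_pset (A : pset) : Prop :=
  exists N, forall k, A k = true -> k < N.

Record is_ideal (I : pset -> Prop) : Prop := {
  ideal_down : forall A B : pset, I B -> (forall k, A k = true -> B k = true) -> I A;
  ideal_union : forall A B : pset, I A -> I B -> I (fun k => orb (A k) (B k));
  ideal_fin : forall A : pset, finite_pset A -> I A;
  ideal_proper : ~ I (fun _ => true)
}.

Definition positive (I : pset -> Prop) (A : pset) : Prop := ~ I A.

Definition set_of_seq (b : nat -> nat) : pset :=
  fun k => if excluded_middle_informative (exists n, b n = k) then true else false.

Definition prefix {A : Type} (s : nat -> A) (n : nat) : list A := map s (seq 0 n).

(* Player I plays A_n in I, Player II plays b_n in omega \ A_n;
   II wins iff {b_n : n} in I^+.
   A strategy for I maps II's previous moves (b_0..b_{n-1}) to A_n;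
   a strategy for II maps I's moves (A_0..A_n) to b_n.  A player who
   makes an illegal move loses. *)

Definition G_winning_I (I : pset -> Prop) (tau : list nat -> pset) : Prop :=
  forall b : nat -> nat,
    (forall n, I (tau (prefix b n))) /\
    ((forall n, tau (prefix b n) (b n) = false) -> I (set_of_seq b)).

Definition G_winning_II (I : pset -> Prop) (sigma : list pset -> nat) : Prop :=
  forall A : nat -> pset, (forall n, I (A n)) ->
    let b := fun n => sigma (prefix A (S n)) in
    (forall n, A n (b n) = false) /\ positive I (set_of_seq b).

Definition G_determined (I : pset -> Prop) : Prop :=
  (exists tau, G_winning_I I tau) \/ (exists sigma, G_winning_II I sigma).

(* The value -1 is encoded by [None]; m_n in n u {-1} means m_n = None or
   m_n = Some k with k < n. *)

Definition legal_m (n : nat) (m : option nat) : Prop :=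
  match m with None => True | Some k => k < n end.

Definition infinitely_defined (g : nat -> option nat) : Prop :=
  forall N, exists n, N <= n /\ g n <> None.

Definition enumerates_support (g : nat -> option nat) (e : nat -> nat) : Prop :=
  (forall i, e i < e (S i)) /\ (forall n, g n <> None <-> exists i, e i = n).

Definition tilde (g : nat -> option nat) (e : nat -> nat) : nat -> nat :=
  fun i => match g (e i) with Some k => k | None => 0 end.

Definition H_II_wins_play (F : (nat -> nat) -> pset) (p : nat -> nat * option nat) : Prop :=
  let g := fun n => snd (p n) in
  infinitely_defined g /\
  forall e, enumerates_support g e ->
    forall k, F (tilde g e) k = set_of_seq (fun n => fst (p n)) k.

Definition H_winning_I (I : pset -> Prop) (F : (nat -> nat) -> pset)
  (tau : list (nat * option nat) -> pset) : Prop :=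
  forall p : nat -> nat * option nat,
    (forall n, I (tau (prefix p n))) /\
    ((forall n, tau (prefix p n) (fst (p n)) = false /\ legal_m n (snd (p n))) ->
       ~ H_II_wins_play F p).

Definition H_winning_II (I : pset -> Prop) (F : (nat -> nat) -> pset)
  (sigma : list pset -> nat * option nat) : Prop :=
  forall A : nat -> pset, (forall n, I (A n)) ->
    let p := fun n => sigma (prefix A (S n)) in
    (forall n, A n (fst (p n)) = false /\ legal_m n (snd (p n))) /\
    H_II_wins_play F p.

Definition H_determined (I : pset -> Prop) (F : (nat -> nat) -> pset) : Prop :=
  (exists tau, H_winning_I I F tau) \/ (exists sigma, H_winning_II I F sigma).

(* Main.v *)
Require Import Defs.
From Stdlib Require Import Arith List Lia ClassicalEpsilon Classical FunctionalExtensionality.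
Import ListNotations.


Lemma prefix_S {A} (s : nat -> A) n : prefix s (S n) = prefix s n ++ [s n].
Proof. unfold prefix. rewrite seq_S, map_app. reflexivity. Qed.

Lemma prefix_length {A} (s : nat -> A) n : length (prefix s n) = n.
Proof. unfold prefix. rewrite length_map, length_seq. reflexivity. Qed.

Lemma prefix_ext_lt {A} (a b : nat -> A) M : (forall i, i < M -> a i = b i) -> prefix a M = prefix b M.
Proof. intros H. unfold prefix. apply map_ext_in. intros i Hi. apply in_seq in Hi. apply H. lia. Qed.

Lemma prefix_eq_nth {A} (a b : nat -> A) N i : prefix a N = prefix b N -> i < N -> a i = b i.
Proof.
  induction N; intros H Hi; [lia|].
  rewrite !prefix_S in H. apply app_inj_tail in H. destruct H as [H1 H2].
  destruct (Nat.eq_dec i N) as [->|ne]; [exact H2|]. apply IHN; auto; lia.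
Qed.

Lemma prefix_mono {A} (a b : nat -> A) N M : prefix a N = prefix b N -> M <= N -> prefix a M = prefix b M.
Proof. intros H HM. apply prefix_ext_lt. intros i Hi. apply (prefix_eq_nth a b N); auto; lia. Qed.

Lemma firstn_prefix {A} (q : nat -> A) n m : m <= n -> firstn m (prefix q n) = prefix q m.
Proof.
  induction n; intros Hm.
  - replace m with 0 by lia. reflexivity.
  - destruct (Nat.eq_dec m (S n)) as [->|ne].
    + apply firstn_all2. rewrite prefix_length. lia.
    + rewrite prefix_S, firstn_app, prefix_length. replace (m - n) with 0 by lia.
      rewrite app_nil_r. apply IHn. lia.
Qed.

Lemma least_ex (P : nat -> Prop) n : P n -> exists m, P m /\ forall k, k < m -> ~ P k.
Proof.
  revert P. induction n as [n IH] using lt_wf_ind. intros P Pn.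
  destruct (classic (exists k, k < n /\ P k)) as [[k [Hk Pk]]|Hno].
  - exact (IH k Hk P Pk).
  - exists n; split; [exact Pn|]. intros k Hk Pk. apply Hno. eauto.
Qed.

Section Buchi.
Variable Y : Type.
Variable U : nat -> (nat -> Y) -> Prop.
Hypothesis Uopen : forall k q, U k q -> exists N, forall q', prefix q' N = prefix q N -> U k q'.
Hypothesis Udec : forall k q, U (S k) q -> U k q.

Definition ext_of (s : list Y) k := forall q', prefix q' (length s) = s -> U k q'.
Fixpoint cnt (s : list Y) k : nat :=
  match k with 0 => 0
  | S k' => cnt s k' + (if excluded_middle_informative (ext_of (firstn k' s) (cnt s k')) then 1 else 0) end.
Definition DD (s : list Y) := ext_of s (cnt s (length s)).

Lemma cnt_stable q k : forall n m, k <= n -> k <= m -> cnt (prefix q n) k = cnt (prefix q m) k.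
Proof.
  induction k; intros n m Hn Hm; [reflexivity|]. cbn [cnt].
  rewrite (IHk n m) by lia. rewrite !firstn_prefix by lia. reflexivity.
Qed.

Definition cc q n := cnt (prefix q n) n.

Lemma cc_S q n : cc q (S n) = cc q n + (if excluded_middle_informative (DD (prefix q n)) then 1 else 0).
Proof.
  unfold cc, DD. cbn [cnt]. rewrite (cnt_stable q n (S n) n) by lia.
  rewrite firstn_prefix by lia. rewrite prefix_length. reflexivity.
Qed.

Lemma cc_mono q n m : n <= m -> cc q n <= cc q m.
Proof. induction 1; [lia|]. rewrite cc_S. lia. Qed.

Lemma Udec_le k j q : k <= j -> U j q -> U k q.
Proof. induction 1; auto. Qed.

Theorem buchi q : (forall k, U k q) <-> (forall N, exists n, N <= n /\ DD (prefix q n)).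
Proof.
  split.
  - intros HU N. apply NNPP; intro Hno.
    assert (Hc : forall j, cc q (N + j) = cc q N).
    { induction j; [rewrite Nat.add_0_r; reflexivity|]. rewrite Nat.add_succ_r, cc_S.
      destruct (excluded_middle_informative (DD (prefix q (N + j)))) as [d|_].
      - exfalso. apply Hno. exists (N + j); split; [lia|exact d].
      - lia. }
    destruct (Uopen _ _ (HU (cc q N))) as [M HM].
    apply Hno. exists (N + M); split; [lia|].
    unfold DD, ext_of. rewrite prefix_length. fold (cc q (N + M)). rewrite Hc.
    intros q' Hq'. apply HM. apply (prefix_mono _ _ (N + M)); auto; lia.
  - intros Hinf.
    assert (Hun : forall k, exists n, k <= cc q n).
    { induction k. - exists 0; lia.
      - destruct IHk as [n Hn]. destruct (Hinf n) as [m [Hm Dm]]. exists (S m).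
        rewrite cc_S. destruct (excluded_middle_informative (DD (prefix q m))); [|contradiction].
        pose proof (cc_mono q n m Hm). lia. }
    intros k. destruct (Hun k) as [n Hn]. destruct (Hinf n) as [m [Hm Dm]].
    unfold DD, ext_of in Dm. rewrite prefix_length in Dm. fold (cc q m) in Dm.
    apply (Udec_le k (cc q m)). { pose proof (cc_mono q n m Hm). lia. }
    apply Dm. reflexivity.
Qed.
End Buchi.


Section Game.
Variables X Y : Type.
Variable LX : X -> Prop.
Variable LY : list (X*Y) -> X -> Y -> Prop.
Variable D : list (X*Y) -> Prop.
Variable x0 : X.
Hypothesis x0ok : LX x0.
Variable y0 : Y.

Local Notation gpos := (list (X*Y)).
Definition ext (h : gpos) a y : gpos := h ++ [(a,y)].

Inductive AttT (Z : gpos -> Prop) : gpos -> Type :=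
| at_now h : D h -> (forall a, LX a -> exists y, LY h a y /\ Z (ext h a y)) -> AttT Z h
| at_step h (ya : forall a, LX a -> Y) :
    (forall a la, LY h a (ya a la)) -> (forall a la, AttT Z (ext h a (ya a la))) -> AttT Z h.

Inductive LT : gpos -> Type :=
| lt_intro h (Ys : gpos -> Prop) (hY : Ys h)
   (stay : forall h', Ys h' -> exists a, LX a /\ forall y, LY h' a y -> Ys (ext h' a y))
   (ja : forall h', Ys h' -> D h' -> X)
   (jok : forall h' yh dh, LX (ja h' yh dh))
   (jn : forall h' yh dh y, LY h' (ja h' yh dh) y -> LT (ext h' (ja h' yh dh) y)) : LT h.

Definition ltY {h} (d : LT h) : gpos -> Prop :=
  match d with lt_intro _ Ys _ _ _ _ _ => Ys end.
Definition ltroot {h} (d : LT h) : ltY d h :=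
  match d as d0 in LT h0 return ltY d0 h0 with lt_intro _ _ hY _ _ _ _ => hY end.
Definition ltstay {h} (d : LT h) : forall h', ltY d h' -> exists a, LX a /\ forall y, LY h' a y -> ltY d (ext h' a y) :=
  match d as d0 in LT h0 return forall h', ltY d0 h' -> exists a, LX a /\ forall y, LY h' a y -> ltY d0 (ext h' a y)
  with lt_intro _ _ _ st _ _ _ => st end.
Definition ltja {h} (d : LT h) : forall h', ltY d h' -> D h' -> X :=
  match d as d0 in LT h0 return forall h', ltY d0 h' -> D h' -> X
  with lt_intro _ _ _ _ ja _ _ => ja end.
Definition ltjok {h} (d : LT h) : forall h' yh dh, LX (ltja d h' yh dh) :=
  match d as d0 in LT h0 return forall h' yh dh, LX (ltja d0 h' yh dh)
  with lt_intro _ _ _ _ _ jok _ => jok end.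
Definition ltjn {h} (d : LT h) : forall h' yh dh y, LY h' (ltja d h' yh dh) y -> LT (ext h' (ltja d h' yh dh) y) :=
  match d as d0 in LT h0 return forall h' yh dh y, LY h' (ltja d0 h' yh dh) y -> LT (ext h' (ltja d0 h' yh dh) y)
  with lt_intro _ _ _ _ _ _ jn => jn end.

Lemma dichotomy : inhabited (LT nil) \/
  exists Z : gpos -> Prop, Z nil /\ forall h, Z h -> inhabited (AttT Z h).
Proof.
  destruct (classic (inhabited (LT nil))) as [H|H]; [left; exact H| right].
  exists (fun h => ~ inhabited (LT h)); split; [exact H|].
  intros h Hh. apply NNPP; intro HA. apply Hh.
  set (Ys := fun h' => ~ inhabited (AttT (fun h => ~ inhabited (LT h)) h')).
  assert (st : forall h', Ys h' -> exists a, LX a /\ forall y, LY h' a y -> Ys (ext h' a y)).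
  { intros h' Hy. apply NNPP; intro Hn. apply Hy.
    assert (Hall : forall a, LX a -> exists y, LY h' a y /\ inhabited (AttT (fun h => ~ inhabited (LT h)) (ext h' a y))).
    { intros a la. apply NNPP; intro Hn2. apply Hn. exists a; split; [exact la|].
      intros y ly Hi. apply Hn2. exists y; split; assumption. }
    set (ya := fun a la => proj1_sig (constructive_indefinite_description _ (Hall a la))).
    constructor. apply (at_step _ h' ya).
    - intros a la. exact (proj1 (proj2_sig (constructive_indefinite_description _ (Hall a la)))).
    - intros a la. exact (epsilon (proj2 (proj2_sig (constructive_indefinite_description _ (Hall a la)))) (fun _ => True)). }
  assert (jex : forall h', Ys h' -> D h' -> exists a, LX a /\ forall y, LY h' a y -> inhabited (LT (ext h' a y))).
  { intros h' Hy Dh. apply NNPP; intro Hn. apply Hy. constructor. apply at_now; [exact Dh|].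
    intros a la. apply NNPP; intro Hn2. apply Hn. exists a; split; [exact la|].
    intros y ly. apply NNPP; intro Hi. apply Hn2. exists y; split; assumption. }
  constructor.
  apply (lt_intro h Ys HA st (fun h' yh dh => proj1_sig (constructive_indefinite_description _ (jex h' yh dh)))).
  - intros h' yh dh. exact (proj1 (proj2_sig (constructive_indefinite_description _ (jex h' yh dh)))).
  - intros h' yh dh y ly. exact (epsilon (proj2 (proj2_sig (constructive_indefinite_description _ (jex h' yh dh))) y ly) (fun _ => True)).
Qed.


Section IIstrat.
Variable Z : gpos -> Prop.
Hypothesis hZ : forall h, Z h -> inhabited (AttT Z h).
Hypothesis Z0 : Z nil.

Definition stII := option {h : gpos & AttT Z h}.

Definition stepII (s : stII) (a : X) : stII * Y :=
  match s with
  | None => (None, y0)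
  | Some (existT _ h d) =>
    match excluded_middle_informative (LX a) with
    | right _ => (None, y0)
    | left la =>
      match d with
      | at_now _ h' dh pre =>
        let c := constructive_indefinite_description _ (pre a la) in
        (Some (existT _ (ext h' a (proj1_sig c)) (epsilon (hZ _ (proj2 (proj2_sig c))) (fun _ => True))), proj1_sig c)
      | at_step _ h' ya ok nx => (Some (existT _ (ext h' a (ya a la)) (nx a la)), ya a la)
      end
    end
  end.

Definition runII (l : list X) : stII :=
  fold_left (fun s a => fst (stepII s a)) l (Some (existT _ nil (epsilon (hZ _ Z0) (fun _ => True)))).

Definition sigmaII (l : list X) : Y :=
  match l with [] => y0 | _ => snd (stepII (runII (removelast l)) (last l x0)) end.

Lemma stepII_spec h d a : LX a ->
  exists d', stepII (Some (existT _ h d)) a = (Some (existT _ (ext h a (snd (stepII (Some (existT _ h d)) a))) d'), snd (stepII (Some (existT _ h d)) a))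
   /\ LY h a (snd (stepII (Some (existT _ h d)) a)).
Proof.
  intros la. simpl. destruct (excluded_middle_informative (LX a)) as [la'|n]; [|contradiction].
  destruct d as [h dh pre | h ya ok nx]; simpl.
  - eexists; split; [reflexivity|]. exact (proj1 (proj2_sig (constructive_indefinite_description _ (pre a la')))).
  - eexists; split; [reflexivity|]. apply ok.
Qed.

Variable A : nat -> X.
Hypothesis Aok : forall n, LX (A n).
Definition histII n := prefix (fun i => (A i, sigmaII (prefix A (S i)))) n.

Lemma sigmaII_eq n : sigmaII (prefix A (S n)) = snd (stepII (runII (prefix A n)) (A n)).
Proof.
  unfold sigmaII. rewrite prefix_S. destruct (prefix A n ++ [A n]) eqn:E.
  - destruct (prefix A n); discriminate.
  - rewrite <- E. rewrite removelast_last, last_last. reflexivity.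
Qed.

Lemma runII_S n : runII (prefix A (S n)) = fst (stepII (runII (prefix A n)) (A n)).
Proof. unfold runII. rewrite prefix_S, fold_left_app. reflexivity. Qed.

Lemma runII_inv n : exists d, runII (prefix A n) = Some (existT _ (histII n) d).
Proof.
  induction n as [|n [d IH]].
  - eexists. reflexivity.
  - destruct (stepII_spec (histII n) d (A n) (Aok n)) as [d' [E _]].
    assert (Es : sigmaII (prefix A (S n)) = snd (stepII (Some (existT _ (histII n) d)) (A n))) by (rewrite sigmaII_eq, IH; reflexivity).
    assert (Hh : histII (S n) = ext (histII n) (A n) (sigmaII (prefix A (S n)))) by (unfold histII; rewrite prefix_S; reflexivity).
    rewrite runII_S, IH, E, Hh, Es. exists d'. reflexivity.
Qed.

Lemma II_legal n : LY (histII n) (A n) (sigmaII (prefix A (S n))).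
Proof.
  destruct (runII_inv n) as [d E]. rewrite sigmaII_eq, E.
  destruct (stepII_spec (histII n) d (A n) (Aok n)) as [d' [_ L]]. exact L.
Qed.

Lemma II_often_aux h (d : AttT Z h) : forall n, runII (prefix A n) = Some (existT _ h d) ->
  exists m, n <= m /\ D (histII m).
Proof.
  induction d as [h dh pre | h ya ok nx IH]; intros n E.
  - destruct (runII_inv n) as [d' E']. rewrite E in E'. injection E' as Eh _.
    exists n; split; [lia|]. rewrite <- Eh. exact dh.
  - assert (E2 : runII (prefix A (S n)) = Some (existT _ (ext h (A n) (ya (A n) (Aok n))) (nx (A n) (Aok n)))).
    { rewrite runII_S, E. simpl. destruct (excluded_middle_informative (LX (A n))) as [la|c]; [|contradiction (c (Aok n))].
      replace la with (Aok n) by apply proof_irrelevance. reflexivity. }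
    destruct (IH (A n) (Aok n) (S n) E2) as [m [Hm Dm]]. exists m; split; [lia|exact Dm].
Qed.

Lemma II_often n : exists m, n <= m /\ D (histII m).
Proof. destruct (runII_inv n) as [d E]. exact (II_often_aux _ d n E). Qed.
End IIstrat.

Record stI := mkst { rh : gpos; rd : LT rh; cur : gpos; curY : ltY rd cur }.
Definition init_st {h} (d : LT h) : stI := mkst h d h (ltroot d).

Definition chooseI (s : stI) : X :=
  match excluded_middle_informative (D (cur s)) with
  | left dh => ltja (rd s) (cur s) (curY s) dh
  | right _ => proj1_sig (constructive_indefinite_description _ (ltstay (rd s) (cur s) (curY s)))
  end.

Definition transI (s : stI) (y : Y) : option stI :=
  match excluded_middle_informative (D (cur s)) with
  | left dh =>
     match excluded_middle_informative (LY (cur s) (ltja (rd s) (cur s) (curY s) dh) y) with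
     | left ly => Some (init_st (ltjn (rd s) (cur s) (curY s) dh y ly))
     | right _ => None end
  | right _ =>
     let c := constructive_indefinite_description _ (ltstay (rd s) (cur s) (curY s)) in
     match excluded_middle_informative (LY (cur s) (proj1_sig c) y) with
     | left ly => Some (mkst (rh s) (rd s) (ext (cur s) (proj1_sig c) y) (proj2 (proj2_sig c) y ly))
     | right _ => None end
  end.

Section Istrat.
Variable d0 : LT nil.
Definition runI (l : list Y) : option stI :=
  fold_left (fun o y => match o with None => None | Some s => transI s y end) l (Some (init_st d0)).
Definition tauI (l : list Y) : X :=
  match runI l with Some s => chooseI s | None => x0 end.

Lemma chooseI_ok s : LX (chooseI s).
Proof.
  unfold chooseI. destruct (excluded_middle_informative (D (cur s))).
  - apply ltjok.
  - exact (proj1 (proj2_sig (constructive_indefinite_description _ (ltstay (rd s) (cur s) (curY s))))).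
Qed.

Lemma tauI_ok l : LX (tauI l).
Proof. unfold tauI. destruct (runI l); [apply chooseI_ok|exact x0ok]. Qed.

Variable p : nat -> Y.
Definition histI n := prefix (fun i => (tauI (prefix p i), p i)) n.
Hypothesis pok : forall n, LY (histI n) (tauI (prefix p n)) (p n).

Lemma runI_S n : runI (prefix p (S n)) = match runI (prefix p n) with None => None | Some s => transI s (p n) end.
Proof. unfold runI. rewrite prefix_S, fold_left_app. reflexivity. Qed.

Lemma runI_inv n : exists s, runI (prefix p n) = Some s /\ cur s = histI n.
Proof.
  induction n as [|n [s [E C]]].
  - eexists; split; reflexivity.
  - rewrite runI_S, E. pose proof (pok n) as L. unfold tauI in L. rewrite E in L.
    assert (T : tauI (prefix p n) = chooseI s) by (unfold tauI; rewrite E; reflexivity).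
    unfold histI. rewrite prefix_S. fold (histI n). rewrite <- C, T.
    rewrite <- C in L. destruct s as [h d c cy]. simpl in *.
    unfold chooseI, transI in *; simpl in *.
    destruct (excluded_middle_informative (D c)) as [dh|nd].
    + destruct (excluded_middle_informative (LY c (ltja d c cy dh) (p n))) as [ly|nl]; [|contradiction].
      eexists; split; [reflexivity|]. reflexivity.
    + destruct (excluded_middle_informative (LY c (proj1_sig (constructive_indefinite_description _ (ltstay d c cy))) (p n))) as [ly|nl]; [|contradiction].
      eexists; split; [reflexivity|]. reflexivity.
Qed.

Lemma I_fin_aux h (d : LT h) : forall n c cy, runI (prefix p n) = Some (mkst h d c cy) ->
  exists N, forall m, N <= m -> ~ D (histI m).
Proof.
  induction d as [h Ys hY st ja jok jn IH]; intros n c cy E.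
  destruct (classic (exists m, n <= m /\ D (histI m))) as [[m [Hm Dm]]|Hno].
  2:{ exists n. intros m Hm Dm. apply Hno; eauto. }
  destruct (least_ex (fun k => D (histI (n + k))) (m - n)) as [k [Dk Hk]].
  { replace (n + (m - n)) with m by lia. exact Dm. }
  assert (Hstay : forall j, j <= k -> exists c' cy', runI (prefix p (n + j)) = Some (mkst h (lt_intro h Ys hY st ja jok jn) c' cy')).
  { induction j as [|j IHj]; intros Hj.
    - rewrite Nat.add_0_r. eauto.
    - destruct (IHj ltac:(lia)) as [c' [cy' Ej]].
      assert (Dn : ~ D (histI (n + j))) by (apply Hk; lia).
      destruct (runI_inv (n + j)) as [s [Es Cs]]. rewrite Ej in Es. injection Es as Es'. subst s. simpl in Cs.
      rewrite Nat.add_succ_r, runI_S, Ej.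
      pose proof (pok (n + j)) as L. unfold tauI in L. rewrite Ej in L.
      unfold chooseI, transI in *; simpl in *.
      destruct (excluded_middle_informative (D c')) as [dh|nd]; [exfalso; apply Dn; rewrite <- Cs; exact dh|].
      rewrite <- Cs in L.
      destruct (excluded_middle_informative (LY c' _ (p (n + j)))) as [ly|nl]; [|contradiction].
      eexists; eexists; reflexivity. }
  destruct (Hstay k (le_n k)) as [c' [cy' Ek]].
  destruct (runI_inv (n + k)) as [s [Es Cs]]. rewrite Ek in Es. injection Es as Es'. subst s. simpl in Cs.
  pose proof (pok (n + k)) as L. unfold tauI in L. rewrite Ek in L.
  assert (E2 := runI_S (n + k)). rewrite Ek in E2. rewrite <- Nat.add_succ_r in E2.
  unfold chooseI, transI in *; simpl in *.
  destruct (excluded_middle_informative (D c')) as [dh|nd]; [|exfalso; apply nd; rewrite Cs; exact Dk].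
  rewrite <- Cs in L.
  destruct (excluded_middle_informative (LY c' _ (p (n + k)))) as [ly|nl]; [|contradiction].
  exact (IH c' cy' dh (p (n + k)) ly _ _ _ E2).
Qed.

Lemma I_fin : exists N, forall m, N <= m -> ~ D (histI m).
Proof.
  unfold runI in *. apply (I_fin_aux nil d0 0 nil (ltroot d0)). reflexivity.
Qed.
End Istrat.
End Game.


Fixpoint enumf (nx : nat -> nat) i := match i with 0 => nx 0 | S i' => nx (S (enumf nx i')) end.

Section Enum.
Variable g : nat -> option nat.

Lemma enum_mono e : enumerates_support g e -> forall i j, i < j -> e i < e j.
Proof.
  intros [Hinc _] i j Hij. induction Hij; [apply Hinc|]. specialize (Hinc m). lia.
Qed.

Lemma enum_ge e : enumerates_support g e -> forall i, i <= e i.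
Proof. intros [Hinc _] i. induction i; [lia|]. specialize (Hinc i). lia. Qed.

Lemma enum_def e : enumerates_support g e -> forall i, g (e i) <> None.
Proof. intros [_ Hs] i. apply Hs. eauto. Qed.

Lemma enum_min e n t : enumerates_support g e -> g n <> None -> (t = 0 \/ e (pred t) < n) -> e t <= n.
Proof.
  intros He Hn Ht. destruct He as [Hinc Hs] eqn:E. apply Hs in Hn. destruct Hn as [j <-].
  destruct (le_lt_dec t j) as [l|l].
  - destruct (Nat.eq_dec t j) as [->|ne]; [lia|]. pose proof (enum_mono e He t j ltac:(lia)). lia.
  - destruct Ht as [->|Ht]; [lia|].
    destruct (Nat.eq_dec j (pred t)) as [->|ne]; [lia|].
    pose proof (enum_mono e He j (pred t) ltac:(lia)). lia.
Qed.

Lemma enum_exists : infinitely_defined g -> exists e, enumerates_support g e.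
Proof.
  intros Hinf.
  assert (Hnx : forall k, exists n, k <= n /\ g n <> None /\ forall j, k <= j -> j < n -> g j = None).
  { intros k. destruct (Hinf k) as [n [Hn Gn]].
    destruct (least_ex (fun n => k <= n /\ g n <> None) n (conj Hn Gn)) as [m [[Hm Gm] Hmin]].
    exists m; repeat split; auto. intros j Hj Hjm. destruct (g j) eqn:E; [|reflexivity].
    exfalso. apply (Hmin j Hjm). split; [auto|congruence]. }
  set (nx := fun k => proj1_sig (constructive_indefinite_description _ (Hnx k))).
  assert (Hnxs : forall k, k <= nx k /\ g (nx k) <> None /\ forall j, k <= j -> j < nx k -> g j = None).
  { intros k. exact (proj2_sig (constructive_indefinite_description _ (Hnx k))). }
  set (e := enumf nx).
  assert (Hinc : forall i, e i < e (S i)).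
  { intros i. change (e (S i)) with (nx (S (e i))). destruct (Hnxs (S (e i))) as [H _]. lia. }
  exists e. split; [exact Hinc|]. intros n. split.
  - intros Gn.
    assert (Hge : forall i, i <= e i). { induction i; [lia|]. specialize (Hinc i). lia. }
    destruct (least_ex (fun i => n <= e i) n (Hge n)) as [i [Hi Hmin]].
    exists i. destruct i as [|i].
    + destruct (Hnxs 0) as [_ [_ H]]. change (e 0) with (nx 0) in *. destruct (Nat.eq_dec (nx 0) n); auto.
      exfalso. apply Gn. apply H; lia.
    + assert (Hlt : e i < n). { specialize (Hmin i ltac:(lia)). lia. }
      destruct (Hnxs (S (e i))) as [_ [_ H]]. change (e (S i)) with (nx (S (e i))) in *.
      destruct (Nat.eq_dec (nx (S (e i))) n); auto.
      exfalso. apply Gn. apply H; lia.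
  - intros [i <-]. destruct i; [change (e 0) with (nx 0)|change (e (S i)) with (nx (S (e i)))]; apply Hnxs.
Qed.
End Enum.

Lemma enum_agree g g' e e' N : enumerates_support g e -> enumerates_support g' e' ->
  (forall n, n < N -> g n = g' n) -> forall t, e t < N -> e' t = e t.
Proof.
  intros He He' Hag t. induction t as [|t IH]; intros Ht.
  - assert (A1 : e' 0 <= e 0). { apply (enum_min g' e'); auto. rewrite <- Hag by auto. apply (enum_def g e He). }
    assert (A2 : e 0 <= e' 0). { apply (enum_min g e); auto. rewrite Hag by lia. apply (enum_def g' e' He'). }
    lia.
  - pose proof (enum_mono g e He t (S t) ltac:(lia)) as Hm.
    specialize (IH ltac:(lia)).
    assert (A1 : e' (S t) <= e (S t)). { apply (enum_min g' e'); auto. rewrite <- Hag by auto. apply (enum_def g e He). right; simpl; lia. }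
    assert (A2 : e (S t) <= e' (S t)). { apply (enum_min g e); auto. rewrite Hag by lia. apply (enum_def g' e' He'). right; simpl. pose proof (enum_mono g' e' He' t (S t) ltac:(lia)). lia. }
    lia.
Qed.

Lemma fin_max (P : nat -> nat -> Prop) k : (forall i, i < k -> exists M, forall N, M <= N -> P i N) ->
  exists M, forall N, M <= N -> forall i, i < k -> P i N.
Proof.
  induction k; intros H. - exists 0. intros; lia.
  - destruct IHk as [M1 H1]. { intros i Hi. apply H. lia. }
    destruct (H k ltac:(lia)) as [M2 H2]. exists (M1 + M2). intros N HN i Hi.
    destruct (Nat.eq_dec i k) as [->|ne]; [apply H2; lia|]. apply H1; lia.
Qed.

Definition Yh := (nat * option nat)%type.

Section UH.
Variable F : (nat -> nat) -> pset.
Hypothesis Fcont : seq_continuous F.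

Definition UH (k : nat) (q : nat -> Yh) : Prop :=
  exists N, k <= N /\
   (exists f : nat -> nat, (forall i, i < k -> f i < N /\ snd (q (f i)) <> None) /\ (forall i, S i < k -> f i < f (S i))) /\
   forall q' e', prefix q' N = prefix q N -> enumerates_support (fun n => snd (q' n)) e' ->
     (forall j, j < k -> F (tilde (fun n => snd (q' n)) e') j = true -> exists n, n < N /\ fst (q n) = j) /\
     (forall n, n < k -> F (tilde (fun n => snd (q' n)) e') (fst (q n)) = true).

Lemma UH_open k q : UH k q -> exists N, forall q'', prefix q'' N = prefix q N -> UH k q''.
Proof.
  intros [N [HkN [[f [Hf1 Hf2]] Hq]]]. exists N. intros q'' Hq''.
  exists N; split; [exact HkN|split].
  - exists f; split; [|exact Hf2]. intros i Hi. destruct (Hf1 i Hi) as [A B]. split; [exact A|].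
    rewrite (prefix_eq_nth q'' q N); auto.
  - intros q' e' Hq' He'. rewrite Hq'' in Hq'. destruct (Hq q' e' Hq' He') as [C1 C2]. split.
    + intros j Hj Fj. destruct (C1 j Hj Fj) as [n [Hn Hnj]]. exists n; split; auto.
      rewrite (prefix_eq_nth q'' q N); auto.
    + intros n Hn. rewrite (prefix_eq_nth q'' q N n) by (auto; lia). auto.
Qed.

Lemma UH_dec k q : UH (S k) q -> UH k q.
Proof.
  intros [N [HkN [[f [Hf1 Hf2]] Hq]]]. exists N; split; [lia|split].
  - exists f; split; intros; [apply Hf1|apply Hf2]; lia.
  - intros q' e' Hq' He'. destruct (Hq q' e' Hq' He') as [C1 C2]. split; intros; [apply C1|apply C2]; auto; lia.
Qed.

Lemma UH_iff q : (forall k, UH k q) <-> H_II_wins_play F q.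
Proof.
  unfold H_II_wins_play. split.
  - intros HU. split.
    + intros M. destruct (HU (S M)) as [N [_ [[f [Hf1 Hf2]] _]]].
      assert (Hge : forall i, i < S M -> i <= f i).
      { induction i; intros Hi; [lia|]. specialize (IHi ltac:(lia)). specialize (Hf2 i Hi). lia. }
      exists (f M); split; [apply Hge; lia|apply Hf1; lia].
    + intros e He j. destruct (F (tilde (fun n => snd (q n)) e) j) eqn:Fj.
      * destruct (HU (S j)) as [N [_ [_ Hq]]]. destruct (Hq q e eq_refl He) as [C1 _].
        destruct (C1 j ltac:(lia) Fj) as [n [_ Hn]].
        unfold set_of_seq. destruct (excluded_middle_informative _) as [_|c]; [reflexivity|].
        exfalso; apply c; eauto.
      * unfold set_of_seq. destruct (excluded_middle_informative _) as [[n Hn]|_]; [|reflexivity].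
        destruct (HU (S n)) as [N [_ [_ Hq]]]. destruct (Hq q e eq_refl He) as [_ C2].
        specialize (C2 n ltac:(lia)). rewrite Hn in C2. congruence.
  - intros [Hinf Hall] k.
    destruct (enum_exists _ Hinf) as [e He].
    set (g := fun n => snd (q n)) in *.
    set (x := tilde g e).
    set (P := fun i N => (F x i = true -> exists n, n < N /\ fst (q n) = i) /\
       forall q' e', prefix q' N = prefix q N -> enumerates_support (fun n => snd (q' n)) e' ->
         F (tilde (fun n => snd (q' n)) e') i = F x i /\ F (tilde (fun n => snd (q' n)) e') (fst (q i)) = F x (fst (q i))).
    destruct (fin_max P k) as [M HM].
    { intros i Hi.
      destruct (Fcont x (S (Nat.max i (fst (q i))))) as [m Hm].
      assert (Hex : exists ni, F x i = true -> fst (q ni) = i).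
      { destruct (F x i) eqn:Fi; [|exists 0; discriminate].
        pose proof (Hall e He i) as Hs. fold g in Hs. fold x in Hs. rewrite Fi in Hs.
        unfold set_of_seq in Hs. destruct (excluded_middle_informative _) as [[n Hn]|_]; [|discriminate].
        exists n; auto. }
      destruct Hex as [ni Hni].
      exists (S (e m) + S ni). intros N HN. split.
      - intros Fi. exists ni; split; [lia|auto].
      - intros q' e' Hq' He'.
        assert (Hag : forall t, t < m -> x t = tilde (fun n => snd (q' n)) e' t).
        { intros t Ht. pose proof (enum_mono g e He t m Ht) as Hmt.
          assert (Hgg : forall n, n < N -> g n = snd (q' n)).
          { intros n Hn. unfold g. rewrite (prefix_eq_nth q q' N n); auto. }
          unfold x, tilde. rewrite (enum_agree g _ e e' N He He' Hgg t) by lia. rewrite Hgg by lia. reflexivity. }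
        split; symmetry; apply (Hm _ Hag); lia. }
    exists (M + S (e k)). split; [pose proof (enum_ge g e He k); lia|split].
    + exists e. split.
      * intros i Hi. split; [pose proof (enum_mono g e He i k Hi); lia|apply (enum_def g e He)].
      * intros i Hi. apply (enum_mono g e He). lia.
    + intros q' e' Hq' He'. split.
      * intros j Hj Fj. destruct (HM (M + S (e k)) ltac:(lia) j Hj) as [C1 C2].
        destruct (C2 q' e' Hq' He') as [D1 _]. rewrite D1 in Fj. auto.
      * intros n Hn. destruct (HM (M + S (e k)) ltac:(lia) n Hn) as [C1 C2].
        destruct (C2 q' e' Hq' He') as [_ D2]. rewrite D2.
        unfold x. rewrite (Hall e He). unfold set_of_seq.
        destruct (excluded_middle_informative _) as [_|c]; [reflexivity|exfalso; apply c; eauto].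
Qed.
End UH.


Section Main.
Variable I : pset -> Prop.
Variable F : (nat -> nat) -> pset.
Hypothesis Hid : is_ideal I.
Hypothesis Fcont : seq_continuous F.
Hypothesis Fpos : forall x, positive I (F x).
Hypothesis Fsurj : forall A, positive I A -> exists x, forall k, F x k = A k.

Definition LYh (h : list (pset * Yh)) (a : pset) (y : Yh) : Prop :=
  a (fst y) = false /\ legal_m (length h) (snd y).
Definition Dh (h : list (pset * Yh)) : Prop := DD Yh (UH F) (map snd h).
Definition xe : pset := fun _ => false.
Lemma xe_ok : I xe.
Proof. apply (ideal_fin _ Hid). exists 0. discriminate. Qed.

Lemma buchiH q : H_II_wins_play F q <-> (forall N, exists n, N <= n /\ DD Yh (UH F) (prefix q n)).
Proof. rewrite <- (UH_iff F Fcont q). apply buchi; [apply UH_open|apply UH_dec]. Qed.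

Lemma H_I_side (d0 : LT pset Yh I LYh Dh nil) : exists tau, H_winning_I I F tau.
Proof.
  exists (tauI pset Yh I LYh Dh xe d0). intros p. split.
  - intros n. apply tauI_ok. exact xe_ok.
  - intros Hleg Hwin.
    assert (Hh : forall n, map snd (histI pset Yh I LYh Dh xe d0 p n) = prefix p n).
    { intros n. unfold histI, prefix. rewrite map_map. reflexivity. }
    assert (Hl : forall n, length (histI pset Yh I LYh Dh xe d0 p n) = n).
    { intros n. unfold histI. apply prefix_length. }
    destruct (I_fin pset Yh I LYh Dh xe d0 p) as [N HN].
    { intros n. destruct (Hleg n) as [A B]. split; [exact A|]. rewrite Hl. exact B. }
    destruct (proj1 (buchiH p) Hwin N) as [n [Hn Dn]]. apply (HN n Hn).
    unfold Dh. rewrite Hh. exact Dn.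
Qed.

Lemma H_II_side Z (hZ : forall h, Z h -> inhabited (AttT pset Yh I LYh Dh Z h)) (Z0 : Z nil) :
  exists sigma, H_winning_II I F sigma.
Proof.
  exists (sigmaII pset Yh I LYh Dh xe (0, None) Z hZ Z0). intros A HA. cbv zeta.
  assert (Hh : forall n, map snd (histII pset Yh I LYh Dh xe (0, None) Z hZ Z0 A n) =
     prefix (fun n => sigmaII pset Yh I LYh Dh xe (0, None) Z hZ Z0 (prefix A (S n))) n).
  { intros n. unfold histII, prefix. rewrite map_map. reflexivity. }
  assert (Hl : forall n, length (histII pset Yh I LYh Dh xe (0, None) Z hZ Z0 A n) = n).
  { intros n. unfold histII. apply prefix_length. }
  split.
  - intros n. destruct (II_legal pset Yh I LYh Dh xe (0, None) Z hZ Z0 A HA n) as [L1 L2].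
    rewrite Hl in L2. split; assumption.
  - apply buchiH. intros N. destruct (II_often pset Yh I LYh Dh xe (0, None) Z hZ Z0 A HA N) as [m [Hm Dm]].
    exists m; split; [exact Hm|]. unfold Dh in Dm. rewrite Hh in Dm. exact Dm.
Qed.

Lemma H_det : H_determined I F /\
  ((exists tau, H_winning_I I F tau) \/ (exists sigma, H_winning_II I F sigma)).
Proof.
  destruct (dichotomy pset Yh I LYh Dh) as [[d0]|[Z [Z0 hZ]]].
  - split; left; apply H_I_side; exact d0.
  - split; right; apply (H_II_side Z hZ Z0).
Qed.

Lemma II_H_to_G : (exists sigma, H_winning_II I F sigma) -> exists sigma, G_winning_II I sigma.
Proof.
  intros [sigma Hs]. exists (fun l => fst (sigma l)). intros A HA. cbv zeta.
  destruct (Hs A HA) as [Hleg [Hinf Hall]]. split.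
  - intros n. apply Hleg.
  - intros HI. destruct (enum_exists _ Hinf) as [e He].
    apply (Fpos (tilde (fun n => snd (sigma (prefix A (S n)))) e)).
    apply (ideal_down _ Hid _ _ HI). intros k Hk. rewrite (Hall e He k) in Hk. exact Hk.
Qed.

Fixpoint allms (n : nat) : list (list (option nat)) :=
  match n with
  | 0 => [[]]
  | S n' => flat_map (fun ms => map (fun o => ms ++ [o]) (None :: map Some (seq 0 n'))) (allms n')
  end.

Lemma allms_in (g : nat -> option nat) n : (forall i, legal_m i (g i)) -> In (prefix g n) (allms n).
Proof.
  intros Hg. induction n; [left; reflexivity|]. rewrite prefix_S. cbn [allms].
  apply in_flat_map. exists (prefix g n); split; [exact IHn|].
  apply (in_map (fun o => prefix g n ++ [o])).
  specialize (Hg n). destruct (g n) as [k|]; [right|left; reflexivity].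
  apply in_map. apply in_seq. simpl in Hg. lia.
Qed.

Lemma combine_prefix {A B} (a : nat -> A) (b : nat -> B) n :
  combine (prefix a n) (prefix b n) = prefix (fun i => (a i, b i)) n.
Proof. unfold prefix. induction (seq 0 n); simpl; congruence. Qed.

Lemma I_union (tau : list Yh -> pset) bs L : (forall l, I (tau l)) ->
  I (fun k => existsb (fun ms => tau (combine bs ms) k) L).
Proof.
  intros Ht. induction L as [|ms L IH].
  - apply (ideal_fin _ Hid). exists 0. discriminate.
  - exact (ideal_union _ Hid _ _ (Ht (combine bs ms)) IH).
Qed.

Fixpoint posf (x : nat -> nat) i := match i with 0 => S (x 0) | S i' => posf x i' + S (x (S i')) end.

Lemma I_H_to_G : (exists tau, H_winning_I I F tau) -> exists tau, G_winning_I I tau.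
Proof.
  intros [tau Ht].
  assert (HtI : forall l, I (tau l)).
  { intros l. destruct (Ht (fun n => nth n l (0, None))) as [H _].
    specialize (H (length l)).
    replace (prefix (fun n => nth n l (0, None)) (length l)) with l in H; [exact H|].
    unfold prefix. clear H. induction l as [|a l IH] using rev_ind; [reflexivity|].
    rewrite length_app, seq_app, map_app. simpl. rewrite app_nth2 by lia. replace (length l - length l) with 0 by lia.
    simpl. f_equal. rewrite IH at 1. apply map_ext_in. intros i Hi. apply in_seq in Hi.
    rewrite app_nth1 by lia. reflexivity. }
  exists (fun bs k => existsb (fun ms => tau (combine bs ms) k) (allms (length bs))).
  intros b. split.
  - intros n. apply I_union. exact HtI.
  - intros Hleg. apply NNPP. intros HnI.
    destruct (Fsurj _ HnI) as [x Hx].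
    set (pos := posf x).
    assert (Hpinc : forall i, pos i < pos (S i)). { intros i. unfold pos; simpl. lia. }
    assert (Hpx : forall i, x i < pos i). { intros [|i]; unfold pos; simpl; lia. }
    assert (Hpge : forall i, i <= pos i). { induction i; [lia|]. specialize (Hpinc i). lia. }
    assert (Hpmono : forall i j, i < j -> pos i < pos j).
    { intros i j Hij. induction Hij; [apply Hpinc|]. specialize (Hpinc m). lia. }
    assert (Hpinj : forall i j, pos i = pos j -> i = j).
    { intros i j E. destruct (lt_eq_lt_dec i j) as [[l|l]|l]; auto;
      [pose proof (Hpmono i j l)|pose proof (Hpmono j i l)]; lia. }
    set (g := fun n => match excluded_middle_informative (exists i, pos i = n) with
                       | left H => Some (x (proj1_sig (constructive_indefinite_description _ H)))
                       | right _ => None end).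
    assert (Hgpos : forall i, g (pos i) = Some (x i)).
    { intros i. unfold g. destruct (excluded_middle_informative _) as [H|c]; [|exfalso; eauto].
      destruct (constructive_indefinite_description _ H) as [j Hj]. simpl. rewrite (Hpinj j i Hj). reflexivity. }
    assert (Hglegal : forall n, legal_m n (g n)).
    { intros n. unfold g. destruct (excluded_middle_informative _) as [H|c]; [|exact Logic.I].
      destruct (constructive_indefinite_description _ H) as [j Hj]. simpl. rewrite <- Hj. apply Hpx. }
    assert (Henum : enumerates_support g pos).
    { split; [exact Hpinc|]. intros n. split.
      - unfold g. destruct (excluded_middle_informative _) as [H|c]; [auto|congruence].
      - intros [i <-]. rewrite Hgpos. discriminate. }
    set (p := fun n => (b n, g n)).
    destruct (Ht p) as [_ Hwin]. apply Hwin.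
    + intros n. split; [|exact (Hglegal n)]. simpl.
      specialize (Hleg n). cbv beta in Hleg.
      destruct (tau (prefix p n) (b n)) eqn:E; [|reflexivity].
      rewrite <- Hleg. symmetry. apply existsb_exists. exists (prefix g n). split.
      * rewrite prefix_length. apply allms_in. exact Hglegal.
      * unfold p in E. rewrite <- (combine_prefix b g n) in E. exact E.
    + split.
      * intros N. exists (pos N). split; [apply Hpge|]. simpl. rewrite Hgpos. discriminate.
      * intros e He k. simpl.
        assert (Hex : tilde (fun n => snd (p n)) e = x).
        { apply functional_extensionality. intros t.
          assert (Et : pos t = e t).
          { apply (enum_agree g g e pos (S (e t)) He Henum); auto. }
          unfold tilde. simpl. rewrite <- Et, Hgpos. reflexivity. }
        unfold p in Hex; simpl in Hex. rewrite Hex, Hx. reflexivity.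
Qed.

End Main.



Theorem proposition49 (I : pset -> Prop) (F : (nat -> nat) -> pset) :
  is_ideal I -> coanalytic I ->
  seq_continuous F ->
  (forall x, positive I (F x)) ->
  (forall A, positive I A -> exists x, forall k, F x k = A k) ->
  H_determined I F /\ G_determined I.
Proof.
  intros Hid _ Fcont Fpos Fsurj.
  destruct (H_det I F Hid Fcont) as [HD [HI|HII]].
  - split; [exact HD|]. left. exact (I_H_to_G I F Hid Fsurj HI).
  - split; [exact HD|]. right. exact (II_H_to_G I F Hid Fpos HII).
Qed.
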